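(* Let $R$ be a commutative ring with ${\rm char}(R)\neq 2$ and $R_2\neq\{0\}$. Let $G$ be a non-abelian group and $\varphi$ an involution on $G$. Then $(RG)^-_\varphi$ is commutative if and only if one of the following holds: \begin{enumerate} \item[(a)] $K=\langle g\in G\mid g\notin G_\varphi\rangle$ is abelian (and thus $G=K\cup Kx$ with $x\in G_\varphi$ and $\varphi(k)=xkx^{-1}$ for all $k\in K$), and $R_2^2=\{0\}$; \item[(b)] ${\rm char}(R)=4$, $|G'|=2$, $G/G'=(G/G')_\varphi$, $g^2\in G_\varphi$ for all $g\in G$, and $G_\varphi$ is commutative in case $R_2^2\neq\{0\}$. \end{enumerate}
   Context: An involution on a group $G$ is a map $\varphi:G\to G$ with $\varphi(gh)=\varphi(h)\varphi(g)$ and $\varphi^2=\mathrm{id}$, extended $R$-linearly to $RG$. $G_\varphi=\{g\in G\mid\varphi(g)=g\}$; $(RG)^-_\varphi=\{\alpha\in RG\mid\varphi(\alpha)=-\alpha\}$; $R_2=\{r\in R\mid 2r=0\}$; $R_2^2=\{0\}$ means $r_1r_2=0$ for all $r_1,r_2\in R_2$. $G'$ is the commutator subgroup; $G/G'=(G/G')_\varphi$ means $\varphi(g)G'=gG'$ for all $g\in G$. ''$G_\varphi$ is commutative'' means any two elements of $G_\varphi$ commute. *)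

(* Defs.v *)
(* Groups are possibly infinite: we use MathComp's
   [groupType] (boot/monoid.v), and the group ring RG is represented by
   formal finite sums (lists of coefficient/element pairs), compared
   coefficientwise. *)
From HB Require Import structures.
From mathcomp Require Import all_boot all_order all_algebra.
Set Implicit Arguments. Unset Strict Implicit. Unset Printing Implicit Defensive.
Import GRing.Theory.

Section GroupNotions.
Variable G : groupType.
Local Open Scope group_scope.

Inductive gen (S : G -> Prop) : G -> Prop :=
| gen_base x : S x -> gen S x
| gen_one : gen S 1
| gen_mul x y : gen S x -> gen S y -> gen S (x * y)
| gen_inv x : gen S x -> gen S x^-1.

Definition commutative_set (S : G -> Prop) : Prop :=
  forall x y, S x -> S y -> x * y = y * x.

Definition nonabelian : Prop := exists x y : G, x * y <> y * x.

Definition involution (phi : G -> G) : Prop :=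
  (forall g h, phi (g * h) = phi h * phi g) /\ (forall g, phi (phi g) = g).

Definition fixed_set (phi : G -> G) : G -> Prop := fun g => phi g = g.

Definition Ksub (phi : G -> G) : G -> Prop := gen (fun g => phi g <> g).

Definition derived : G -> Prop := gen (fun c => exists x y : G, c = [~ x, y]).

Definition two_elements (S : G -> Prop) : Prop :=
  exists a b : G, a <> b /\ forall g, S g <-> (g = a \/ g = b).

End GroupNotions.
Arguments derived G : clear implicits.
Arguments nonabelian G : clear implicits.

Section GroupRing.
Variables (R : comPzRingType) (G : groupType).
Local Open Scope ring_scope.

Definition grelt := seq (R * G).

Definition coef (a : grelt) (g : G) : R := \sum_(p <- a | p.2 == g) p.1.

Definition gr_eq (a b : grelt) : Prop := forall g, coef a g = coef b g.

Definition gr_mul (a b : grelt) : grelt :=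
  [seq (p.1 * q.1, (p.2 * q.2)%g) | p <- a, q <- b].

Definition gr_opp (a : grelt) : grelt := [seq (- p.1, p.2) | p <- a].

Definition gr_map (phi : G -> G) (a : grelt) : grelt := [seq (p.1, phi p.2) | p <- a].

Definition skew (phi : G -> G) (a : grelt) : Prop := gr_eq (gr_map phi a) (gr_opp a).

Definition skew_commutative (phi : G -> G) : Prop :=
  forall a b, skew phi a -> skew phi b -> gr_eq (gr_mul a b) (gr_mul b a).

End GroupRing.

Section RingNotions.
Variable R : comPzRingType.
Local Open Scope ring_scope.

Definition char_is (n : nat) : Prop :=
  if n is 0 then forall m, (0 < m)%N -> m%:R != 0 :> R
  else (n%:R = 0 :> R) /\ forall m, (0 < m < n)%N -> m%:R != 0 :> R.

Definition R2 (r : R) : Prop := r *+ 2 = 0.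

Definition R2sq_zero : Prop := forall r1 r2 : R, R2 r1 -> R2 r2 -> r1 * r2 = 0.

End RingNotions.

(* Main.v *)
Require Import Defs.
From HB Require Import structures.
From mathcomp Require Import all_boot all_order all_algebra.
Set Implicit Arguments. Unset Strict Implicit. Unset Printing Implicit Defensive.
Import GRing.Theory.
From Stdlib Require Import Classical.

Section Coef.
Variables (R : comPzRingType) (G : groupType).
Local Open Scope ring_scope.
Implicit Types (a b : grelt R G) (x y g h : G) (r : R).

Lemma coef_nil g : coef ([::] : grelt R G) g = 0.
Proof. by rewrite /coef big_nil. Qed.

Lemma coef_cons r y a g : coef ((r, y) :: a) g = (if y == g then r else 0) + coef a g.
Proof. by rewrite /coef big_cons /=; case: (y == g); rewrite ?add0r. Qed.

Lemma coef_cat a b g : coef (a ++ b) g = coef a g + coef b g.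
Proof. by rewrite /coef big_cat. Qed.

Lemma coef_filter (f : pred G) a g :
  coef (filter (fun p => f p.2) a) g = if f g then coef a g else 0.
Proof.
elim: a => [|[r y] a IH]; first by rewrite /= !coef_nil; case: (f g).
rewrite /=; case fy: (f y); rewrite ?coef_cons IH; case: eqP => [<-|_];
  rewrite ?fy ?add0r //; by case: (f g); rewrite ?addr0.
Qed.

Lemma coef_opp a g : coef (gr_opp a) g = - coef a g.
Proof.
elim: a => [|[r y] a IH]; first by rewrite /= !coef_nil oppr0.
by rewrite /= !coef_cons IH opprD; case: eqP; rewrite ?oppr0.
Qed.

Lemma coef_map (phi : G -> G) a g : involution phi ->
  coef (gr_map phi a) g = coef a (phi g).
Proof.
move=> [_ Hpp]; elim: a => [|[r y] a IH]; first by rewrite /= !coef_nil.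
rewrite /= !coef_cons IH; congr (_ + _).
have -> : (phi y == g) = (y == phi g); last by [].
apply/eqP/eqP => [<-|->]; by rewrite Hpp.
Qed.

Definition dsum a b g : R :=
  \sum_(p <- a) \sum_(q <- b) (if (p.2 * q.2)%g == g then p.1 * q.1 else 0).

Lemma coef_mul a b g : coef (gr_mul a b) g = dsum a b g.
Proof.
rewrite /dsum; elim: a => [|[r y] a IH]; first by rewrite /= coef_nil big_nil.
rewrite /= coef_cat IH big_cons /=; congr (_ + _).
elim: b {IH} => [|[t z] b IHb]; first by rewrite /= coef_nil big_nil.
by rewrite /= coef_cons IHb big_cons.
Qed.

Lemma dsum_l a b g : dsum a b g = \sum_(p <- a) p.1 * coef b (p.2^-1 * g)%g.
Proof.
apply: eq_bigr => [[r y]] _ /=.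
elim: b => [|[t z] b IH]; first by rewrite coef_nil big_nil mulr0.
rewrite big_cons coef_cons IH mulrDr /=; congr (_ + _).
have -> : ((y * z)%g == g) = (z == (y^-1 * g)%g).
by apply/eqP/eqP => [<-|->]; [rewrite mulKg | rewrite mulVKg].
by case: eqP; rewrite ?mulr0.
Qed.

Lemma dsum_r a b g : dsum a b g = \sum_(q <- b) coef a (g * q.2^-1)%g * q.1.
Proof.
rewrite /dsum exchange_big /=; apply: eq_bigr => [[t z]] _ /=.
elim: a => [|[r y] a IH]; first by rewrite coef_nil big_nil mul0r.
rewrite big_cons coef_cons IH mulrDl /=; congr (_ + _).
have -> : ((y * z)%g == g) = (y == (g * z^-1)%g).
  by apply/eqP/eqP => [<-|->]; [rewrite mulgK | rewrite mulgVK].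
by case: eqP; rewrite ?mul0r.
Qed.

End Coef.

Section Skew.
Variables (R : comPzRingType) (G : groupType) (phi : G -> G).
Hypothesis Hphi : involution phi.
Local Open Scope ring_scope.
Implicit Types (a b : grelt R G) (x y g h : G) (r : R).

Lemma phiK x : phi (phi x) = x. Proof. by case: Hphi. Qed.

Lemma phi_eq x y : (phi x == y) = (x == phi y).
Proof. by apply/eqP/eqP => [<-|->]; rewrite phiK. Qed.

Lemma skewP a : Defs.skew phi a <-> forall x, coef a (phi x) = - coef a x.
Proof.
split=> H x; first by have := H x; rewrite coef_map // coef_opp.
by rewrite coef_map // coef_opp H.
Qed.

Definition commR a b := gr_eq (gr_mul a b) (gr_mul b a).

Lemma mul_eql a a' b g : gr_eq a a' -> coef (gr_mul a b) g = coef (gr_mul a' b) g.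
Proof. by move=> E; rewrite !coef_mul !dsum_r; apply: eq_bigr => q _; rewrite E. Qed.

Lemma mul_eqr a b b' g : gr_eq b b' -> coef (gr_mul a b) g = coef (gr_mul a b') g.
Proof. by move=> E; rewrite !coef_mul !dsum_l; apply: eq_bigr => q _; rewrite E. Qed.

Lemma comm_sym a b : commR a b -> commR b a.
Proof. by move=> H g; rewrite H. Qed.

Lemma comm_eql a a' b : gr_eq a a' -> commR a b -> commR a' b.
Proof.
move=> E H g; rewrite -(mul_eql _ _ E) H; exact: mul_eqr.
Qed.

Lemma mul_catl a1 a2 b g :
  coef (gr_mul (a1 ++ a2) b) g = coef (gr_mul a1 b) g + coef (gr_mul a2 b) g.
Proof. by rewrite !coef_mul /dsum big_cat. Qed.

Lemma mul_catr a b1 b2 g :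
  coef (gr_mul a (b1 ++ b2)) g = coef (gr_mul a b1) g + coef (gr_mul a b2) g.
Proof.
rewrite !coef_mul !dsum_l -big_split /=; apply: eq_bigr => p _.
by rewrite coef_cat mulrDr.
Qed.

Lemma comm_catl a1 a2 b : commR a1 b -> commR a2 b -> commR (a1 ++ a2) b.
Proof. by move=> H1 H2 g; rewrite mul_catl mul_catr H1 H2. Qed.

Lemma comm_nil b : commR [::] b.
Proof.
move=> g; rewrite coef_mul dsum_l coef_mul dsum_l big_nil big1 // => p _.
by rewrite coef_nil mulr0.
Qed.

Lemma skew_ind (Q : grelt R G -> Prop) :
  (forall a a', gr_eq a a' -> Q a -> Q a') ->
  Q [::] ->
  (forall a1 a2, Q a1 -> Q a2 -> Q (a1 ++ a2)) ->
  (forall r g, phi g <> g -> Q [:: (r, g); (- r, phi g)]) ->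
  (forall r g, phi g = g -> r *+ 2 = 0 -> Q [:: (r, g)]) ->
  forall a, Defs.skew phi a -> Q a.
Proof.
move=> Qeq Q0 Qcat Q1 Q2 a.
move: {2}(size a) (leqnn (size a)) => n; elim: n a => [|n IH] a.
  by rewrite leqn0 => /nilP -> _.
case: a => [|[r y] a] Hs Ha; first exact: Q0.
have /skewP Sk := Ha.
case: (eqVneq (phi y) y) => Hy.
- pose c := coef ((r, y) :: a) y.
  pose a1 := filter (fun p => (fun z => z != y) p.2) ((r, y) :: a).
  have Hc : c *+ 2 = 0.
    by rewrite /c mulr2n; have := Sk y; rewrite Hy => E; rewrite {1}E addNr.
  apply: (Qeq ([:: (c, y)] ++ a1)).
    move=> g; rewrite coef_cat coef_filter coef_cons coef_nil addr0.
    case: (eqVneq y g) => [<-|ne]; first by rewrite /= addr0.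
    by rewrite /= add0r.
  apply: Qcat; first exact: Q2.
  apply: IH.
    rewrite /a1 /= eqxx /= size_filter; apply: leq_trans (count_size _ _) _.
    exact: Hs.
  apply/skewP => x; rewrite !coef_filter.
  rewrite phi_eq Hy.
  by case: (x != y); rewrite ?Sk ?oppr0.
- pose c := coef ((r, y) :: a) y.
  pose a1 := filter (fun p => (fun z => (z != y) && (z != phi y)) p.2) ((r, y) :: a).
  apply: (Qeq ([:: (c, y); (- c, phi y)] ++ a1)).
    move=> g; rewrite coef_cat coef_filter !coef_cons coef_nil addr0.
    case: (eqVneq y g) => [<-|ne1].
      by rewrite (negbTE Hy) /= !addr0 /c coef_cons eqxx.
    case: (eqVneq (phi y) g) => [<-|ne2].
      by rewrite /= addr0 add0r /c -Sk coef_cons eq_sym (negbTE Hy).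
    by rewrite /= !add0r.
  apply: Qcat; first by apply: Q1; apply/eqP.
  apply: IH.
    rewrite /a1 /= eqxx /= size_filter; apply: leq_trans (count_size _ _) _.
    exact: Hs.
  apply/skewP => x; rewrite !coef_filter.
  rewrite !phi_eq phiK andbC.
  by case: ((x != y) && (x != phi y)); rewrite ?Sk ?oppr0.
Qed.

End Skew.

Section RingFacts.
Variable R : comPzRingType.
Local Open Scope ring_scope.

Lemma ind1 (b : bool) : (if b then (1:R) else 0) = (b:nat)%:R. Proof. by case: b. Qed.
Lemma indN1 (b : bool) : (if b then (-1:R) else 0) = - (b:nat)%:R.
Proof. by case: b; rewrite ?oppr0. Qed.
Lemma indt (t : R) (b : bool) : (if b then t else 0) = t *+ b. Proof. by case: b. Qed.

Lemma par_mul (t : R) m : t *+ 2 = 0 -> t *+ m = t *+ odd m.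
Proof.
move=> Ht; rewrite -[in LHS](odd_double_half m) mulrnDr -muln2 mulnC mulrnA Ht mul0rn addr0.
by [].
Qed.

Lemma par_eq (t : R) m n : t *+ 2 = 0 -> t != 0 -> t *+ m = t *+ n -> odd m = odd n.
Proof.
move=> Ht Hn; rewrite (par_mul m Ht) (par_mul n Ht).
by case: (odd m); case: (odd n) => //= /eqP; rewrite ?(negbTE Hn) // eq_sym (negbTE Hn).
Qed.

Lemma sub_swap (x y z w : R) : x - y = z - w -> x + w = z + y.
Proof. by move=> H; rewrite -(subrK y x) H addrAC subrK. Qed.

Lemma four_nat (a b c d : nat) :
  a%:R + (- b%:R + (- c%:R + (d%:R + 0))) = (a + d)%:R - (b + c)%:R :> R.
Proof.
rewrite addr0 !natrD opprD -addrA; congr (_ + _).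
by rewrite addrA addrC.
Qed.

Lemma natr_small (m n : nat) : (m <= 4)%N -> (n <= 4)%N ->
  (1:R) != 0 -> (2%:R:R) != 0 -> (3%:R:R) != 0 ->
  m%:R = n%:R :> R -> m = n \/ (4%:R = 0 :> R /\ [|| (m == 4%N) && (n == 0%N) | (m == 0%N) && (n == 4%N)]).
Proof.
move=> Hm Hn H1 H2 H3.
wlog le: m n Hm Hn / (n <= m)%N.
  move=> W E; case: (leqP n m) => [le|/ltnW le]; first exact: W.
  case: (W n m Hn Hm le (esym E)) => [->|[h1 h2]]; first by left.
  by right; split => //; rewrite orbC andbC [X in _ || X]andbC.
move=> E; have : ((m - n)%N)%:R = 0 :> R by rewrite natrB // E subrr.
have : (m - n <= 4)%N by apply: leq_trans (leq_subr _ _) Hm.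
have := subnK le.
case: (m - n)%N => [|[|[|[|[|k]]]]] //= Hs _ Z.
- by left; rewrite -Hs.
- by move: H1; rewrite -Z mulr1n eqxx.
- by move: H2; rewrite Z eqxx.
- by move: H3; rewrite Z eqxx.
- right; split => //; rewrite -Hs in Hm *.
  by move: Hm; case: n {E le Hs Hn} => [|n] //; rewrite addnS ltnNge leq_addr.
Qed.

End RingFacts.

Section GT.
Variables (G : groupType) (phi : G -> G).
Hypothesis Hphi : involution phi.
Local Open Scope group_scope.
Implicit Types (x y z : G).

Lemma phiM x y : phi (x * y) = phi y * phi x. Proof. by case: Hphi. Qed.
Lemma phiKg x : phi (phi x) = x. Proof. by case: Hphi. Qed.

Lemma phi1 : phi 1 = 1.
Proof. by apply: (mulIg (phi 1)); rewrite mul1g -phiM mul1g. Qed.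

Lemma phiV x : phi x^-1 = (phi x)^-1.
Proof. by apply/esym/mulg1_eq; rewrite -phiM mulVg phi1. Qed.

Lemma cancl x y z : x * y = x * z -> y = z. Proof. exact: mulgI. Qed.
Lemma cancr x y z : y * x = z * x -> y = z. Proof. exact: mulIg. Qed.

Hypothesis HB : forall g h, phi g <> g -> phi h = h ->
  (g * h = h * g /\ h * phi g = phi g * h) \/ (g * h = h * phi g /\ h * g = phi g * h).
Hypothesis HA : forall g h, phi g <> g -> phi h <> h -> g * h <> h * g ->
  [/\ g * h = phi g * phi h, g * h = h * phi g & g * h = phi h * g].

Section Pair.
Variables g h : G.
Hypotheses (gN : phi g <> g) (hN : phi h <> h) (gh : g * h <> h * g).
Definition s0 := locked (g^-1 * phi g).
Local Notation s := s0.

Lemma f1 : phi g = g * s. Proof. by rewrite /s0 -lock mulVKg. Qed.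

Lemma hg : h * g <> g * h. Proof. by move=> E; apply: gh. Qed.

Lemma f2 : phi h = s * h.
Proof.
have [_ F2 F3] := HA hN gN hg.
apply: (mulgI g); rewrite -F2 mulgA -f1; exact: F3.
Qed.

Lemma ss1 : s * s = 1.
Proof.
have [E1 _ _] := HA gN hN gh.
move: E1; rewrite f1 f2 !mulgA => /(mulIg h).
by rewrite -mulgA -{1}[g]mulg1 => /(mulgI g) /esym.
Qed.
Lemma sh : s * h = h * s.
Proof.
have [_ E2 _] := HA gN hN gh; have [_ _ F3] := HA hN gN hg.
move: E2; rewrite f1 mulgA F3 f1 -!mulgA => /(mulgI g) E.
by rewrite {1}E !mulgA ss1 mul1g.
Qed.

Lemma sg : s * g = g * s.
Proof.
have [_ _ E3] := HA gN hN gh; have [_ _ F3] := HA hN gN hg.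
move: E3; rewrite f2 -mulgA F3 f1 !mulgA => /(mulIg h) E.
by rewrite {1}E -!mulgA [s * (s * _)]mulgA ss1 mul1g.
Qed.

Lemma f3 : phi h = h * s. Proof. by rewrite f2 sh. Qed.

Lemma s_ne1 : s <> 1.
Proof. by move=> E; apply: gN; rewrite f1 E mulg1. Qed.

Lemma s_comm : [~ g, h] = s.
Proof.
have [_ E2 _] := HA gN hN gh.
by rewrite /commg /conjg E2 mulKg /s0 -lock.
Qed.

Lemma sV : s^-1 = s.
Proof. by apply: mulg1_eq; rewrite ss1. Qed.

Lemma conj_s x : x = s * x * s -> x * s = s * x.
Proof. by move=> {1}->; rewrite -mulgA ss1 mulg1. Qed.

Lemma key x y : phi y <> y -> phi y = y * s -> phi x <> x -> x * y <> y * x ->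
  phi x = x * s.
Proof.
move=> yN Ey xN xy.
have [_ E _] := HA xN yN xy.
have yx : y * x <> x * y by move=> H; apply: xy.
have [_ F _] := HA yN xN yx.
apply: (mulgI y); rewrite -E mulgA F Ey -!mulgA ss1 mulg1.
by [].
Qed.

Lemma S4 x : phi x <> x -> phi x = x * s.
Proof.
move=> xN.
case: (eqVneq (x * g) (g * x)) => [xg|xg]; last first.
  by apply: (key gN f1 xN); apply/eqP.
case: (eqVneq (x * h) (h * x)) => [xh|xh]; last first.
  by apply: (key hN f3 xN); apply/eqP.
have cx : x * s = s * x.
  have : commute x [~ g, h].
    rewrite /commg /conjg; apply: commuteM; first by apply: commuteV; exact: xg.
    apply: commuteM; first by apply: commuteV; exact: xh.
    by apply: commuteM; [exact: xg | exact: xh].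
  by rewrite s_comm.
have xgh : x * g * h <> h * (x * g).
  move=> E; apply: gh; apply: (mulgI x).
  by rewrite mulgA E mulgA -xh -mulgA.
case: (eqVneq (phi (x * g)) (x * g)) => [E|E].
  move: E; rewrite phiM f1 xg -!mulgA => /(mulgI g) E.
  by apply: (mulgI s); rewrite E cx mulgA ss1 mul1g.
have := key hN f3 (x := x * g) (elimN eqP E) xgh.
rewrite phiM f1 xg -!mulgA => /(mulgI g); rewrite cx => /(mulgI s) E'.
by case: xN.
Qed.
Lemma phis : phi s = s.
Proof.
rewrite {1}/s0 -lock phiM phiV phiKg f1 invgM sV mulgA -sg mulgK.
by [].
Qed.

Lemma S5 x : x * s = s * x.
Proof.
case: (eqVneq (phi x) x) => [xF|/eqP xN].
  have [[E1 E2]|[E1 E2]] := HB gN xF.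
    move: E2; rewrite f1 mulgA -E1 -!mulgA => /(mulgI g) /esym.
    by [].
  apply: conj_s; move: E1; rewrite f1 mulgA E2 f1 -!mulgA => /(mulgI g).
  by rewrite !mulgA.
apply: conj_s; rewrite -{1}(phiKg x) (S4 xN) phiM phis (S4 xN).
by rewrite mulgA.
Qed.

Lemma S7 x y : x * y <> y * x -> x * y = y * x * s.
Proof.
move=> xy.
have yx : y * x <> x * y by move=> E; apply: xy.
case: (eqVneq (phi x) x) => [xF|/eqP xN]; case: (eqVneq (phi y) y) => [yF|/eqP yN].
- have xyN : phi (x * y) <> x * y by rewrite phiM xF yF => E; apply: xy.
  have := S4 xyN; rewrite phiM xF yF => E.
  by rewrite E -mulgA ss1 mulg1.
- have [[E1 E2]|[E1 E2]] := HB yN xF; first by case: yx.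
  by rewrite E2 (S4 yN) -mulgA -S5 mulgA.
- have [[E1 E2]|[E1 E2]] := HB xN yF; first by case: xy.
  by rewrite E1 (S4 xN) mulgA.
- have [_ E _] := HA xN yN xy.
  by rewrite E (S4 xN) mulgA.
Qed.

Lemma S8 x y : [~ x, y] = 1 \/ [~ x, y] = s.
Proof.
case: (eqVneq (x * y) (y * x)) => [E|/eqP E].
  by left; apply/eqP/commgP.
by right; rewrite /commg /conjg (S7 E) -!mulgA mulKg mulKg.
Qed.

Lemma S_derived z : derived G z -> z = 1 \/ z = s.
Proof.
elim=> {z} [c [x [y ->]]|| x y _ [->|->] _ [->|->] | x _ [->|->]].
- exact: S8.
- by left.
- by left; rewrite mulg1.
- by right; rewrite mul1g.
- by right; rewrite mulg1.
- by left; rewrite ss1.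
- by left; rewrite invg1.
- by right; rewrite sV.
Qed.

Lemma S_two : two_elements (derived G).
Proof.
exists 1, s; split; first by move=> E; apply: s_ne1.
move=> z; split; first exact: S_derived.
case=> ->; first exact: gen_one.
by apply: gen_base; exists g, h; rewrite s_comm.
Qed.

Lemma S9 x : derived G (x^-1 * phi x).
Proof.
case: (eqVneq (phi x) x) => [->|/eqP xN]; first by rewrite mulVg; exact: gen_one.
by rewrite (S4 xN) mulKg; apply: gen_base; exists g, h; rewrite s_comm.
Qed.

Lemma S10 x : fixed_set phi (x * x).
Proof.
rewrite /fixed_set phiM.
case: (eqVneq (phi x) x) => [->|/eqP xN] //.
by rewrite (S4 xN) mulgA -(mulgA x s) -S5 !mulgA -(mulgA _ s) ss1 mulg1.
Qed.

End Pair.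

Lemma gen_comm (S : G -> Prop) : commutative_set S -> commutative_set (gen S).
Proof.
move=> HS.
have H1 x y : S x -> gen S y -> x * y = y * x.
  move=> Sx; elim=> {y} [y Sy|| y z _ Hy _ Hz | y _ Hy].
  - exact: HS.
  - by rewrite mulg1 mul1g.
  - exact: (commuteM Hy Hz).
  - exact: (commuteV Hy).
move=> x y; elim=> {x} [x Sx|| x z _ Hx _ Hz | x _ Hx] Gy.
- exact: H1.
- by rewrite mulg1 mul1g.
- apply/esym; apply: commuteM; apply/esym; [exact: Hx | exact: Hz].
- apply/esym; apply: commuteV; apply/esym; exact: Hx.
Qed.

Lemma NF_contra : nonabelian G ->
  (forall x y, phi x <> x -> phi y <> y -> x * y = y * x) ->
  commutative_set (fixed_set phi) -> False.
Proof.
move=> [x [y xy]] HN HF.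
have key u v : phi u <> u -> phi v = v -> u * v = v * u.
  move=> uN vF; have [[E1 _]|[E1 E2]] := HB uN vF => //.
  have F : fixed_set phi (u * v) by rewrite /fixed_set phiM vF -E1.
  have := HF _ _ vF F; rewrite !mulgA => /(mulIg v) /esym.
  by [].
case: (eqVneq (phi x) x) => [xF|/eqP xN]; case: (eqVneq (phi y) y) => [yF|/eqP yN].
- exact: xy (HF _ _ xF yF).
- by apply: xy; apply/esym/key.
- exact: xy (key _ _ xN yF).
- exact: xy (HN _ _ xN yN).
Qed.

End GT.

Section Fwd.
Variables (R : comPzRingType) (G : groupType) (phi : G -> G).
Hypothesis Hphi : involution phi.
Local Open Scope ring_scope.
Variable t0 : R.
Hypotheses (Ht0 : t0 *+ 2 = 0) (Ht0n : t0 != 0) (H2 : (2%:R : R) != 0).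

Lemma one_ne0 : (1 : R) != 0.
Proof. apply/eqP => E; apply/(negP Ht0n)/eqP; by rewrite -[t0]mulr1 E mulr0. Qed.

Lemma three_ne0 : (3%:R : R) != 0.
Proof.
apply/eqP => E; apply/(negP Ht0n)/eqP.
by have := congr1 (fun x => t0 * x) E; rewrite mulr0 mulr_natr mulrS Ht0 addr0.
Qed.

Lemma negt (t : R) : t *+ 2 = 0 -> - t = t.
Proof. by move=> Ht; apply/esym/eqP; rewrite -addr_eq0 -mulr2n Ht. Qed.

Definition dg (g : G) : grelt R G := [:: (1, g); (-1, phi g)].
Definition et (t : R) (h : G) : grelt R G := [:: (t, h)].

Lemma skew_d g : Defs.skew phi (dg g).
Proof.
apply/skewP => // x; rewrite !coef_cons !coef_nil !addr0.
rewrite [g == _]eq_sym phi_eq // [phi g == phi x]phi_eq // phiK // [x == phi g]eq_sym.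
by case: (g == x); case: (phi g == x); rewrite ?opprD ?opprK ?oppr0 ?addr0 ?add0r // addrC.
Qed.

Lemma skew_e t h : phi h = h -> t *+ 2 = 0 -> Defs.skew phi (et t h).
Proof.
move=> hF Ht; apply/skewP => // x; rewrite !coef_cons !coef_nil !addr0.
rewrite [h == _]eq_sym phi_eq // hF eq_sym.
by case: (h == x); rewrite ?oppr0 // negt.
Qed.

Hypothesis Hsc : skew_commutative R phi.

Lemma fwdB g h : phi g <> g -> phi h = h ->
  (g * h = h * g /\ h * phi g = phi g * h)%g \/ (g * h = h * phi g /\ h * g = phi g * h)%g.
Proof.
move=> gN hF.
have E := Hsc (skew_d g) (skew_e hF Ht0).
have P x : odd (((g * h)%g == x) + ((phi g * h)%g == x)) =
           odd (((h * g)%g == x) + ((h * phi g)%g == x)).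
  apply: (par_eq Ht0 Ht0n); rewrite !mulrnDr -!indt.
  have := E x; rewrite /gr_mul /= !coef_cons coef_nil !addr0.
  by rewrite mul1r mulN1r mulr1 mulrN1 (negt Ht0).
have ne : ((phi g * h)%g == (g * h)%g) = false.
  by apply/eqP => /(mulIg h).
have P1 := P (g * h)%g; rewrite eqxx ne in P1.
have P2 := P (phi g * h)%g; rewrite eqxx eq_sym ne in P2.
move: P1 P2.
case: (eqVneq (h * g)%g (g * h)%g) => [E1|n1]; case: (eqVneq (h * phi g)%g (g * h)%g) => [E2|n2] //= _.
- rewrite E1 [(g * h)%g == _]eq_sym ne add0n; case: eqP => // E3 _; by left; split.
- rewrite E2 [(g * h)%g == _]eq_sym ne addn0; case: eqP => // E3 _; by right; split.
Qed.

Lemma bool4 (a b c d : bool) : (a + b + (c + d) <= 4)%N.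
Proof. by case: a; case: b; case: c; case: d. Qed.

Lemma fwdA g h : phi g <> g -> phi h <> h -> (g * h <> h * g)%g ->
  [/\ (g * h = phi g * phi h)%g, (g * h = h * phi g)%g, (g * h = phi h * g)%g
    & 4%:R = 0 :> R].
Proof.
move=> gN hN gh.
have E := Hsc (skew_d g) (skew_d h).
have P x : ((((g * h)%g == x) + ((phi g * phi h)%g == x))
           + (((h * phi g)%g == x) + ((phi h * g)%g == x)))%N%:R =
           ((((h * g)%g == x) + ((phi h * phi g)%g == x))
           + (((g * phi h)%g == x) + ((phi g * h)%g == x)))%N%:R :> R.
  have := E x; rewrite /gr_mul /= !coef_cons !coef_nil.
  rewrite !mulrNN !mulr1 !mul1r !ind1 !indN1 !four_nat => /sub_swap.
  by rewrite -!natrD.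
have f1 : ((h * g)%g == (g * h)%g) = false by apply/eqP => E1; apply: gh.
have f2 : ((g * phi h)%g == (g * h)%g) = false by apply/eqP => /(mulgI g).
have f3 : ((phi g * h)%g == (g * h)%g) = false by apply/eqP => /(mulIg h).
have Q := P (g * h)%g; rewrite eqxx f1 f2 f3 in Q.
have := natr_small (bool4 _ _ _ _) (bool4 _ _ _ _) one_ne0 H2 three_ne0 Q.
case: (eqVneq (phi g * phi h)%g (g * h)%g) => [eu|nu];
case: (eqVneq (h * phi g)%g (g * h)%g) => [ev|nv];
case: (eqVneq (phi h * g)%g (g * h)%g) => [ew|nw];
case: (eqVneq (phi h * phi g)%g (g * h)%g) => [ez|nz];
move=> [/eqP E1|[H4 B]] //=.
have fx : phi (g * h)%g = (g * h)%g by rewrite phiM // ez.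
have [[E2 _]|[E2 _]] := fwdB gN fx.
  by case: gh; move: E2; rewrite -mulgA => /(mulgI g).
by move: E2; rewrite -mulgA => /(mulgI g) E3; rewrite -E3 eqxx in nv.
Qed.

Lemma fwdC : ~ R2sq_zero R -> commutative_set (fixed_set phi).
Proof.
move=> HnR x y xF yF.
case: (eqVneq (x * y)%g (y * x)%g) => // ne; case: HnR => r1 r2 Hr1 Hr2.
have E := Hsc (skew_e xF Hr1) (skew_e yF Hr2) (x * y)%g.
move: E; rewrite /gr_mul /= !coef_cons !coef_nil eqxx eq_sym (negbTE ne).
by rewrite !addr0.
Qed.

End Fwd.

Section Conv.
Variables (R : comPzRingType) (G : groupType) (phi : G -> G).
Hypothesis Hphi : involution phi.
Local Open Scope ring_scope.

Definition B1 (r : R) (g : G) : grelt R G := [:: (r, g); (- r, phi g)].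
Definition B2 (r : R) (g : G) : grelt R G := [:: (r, g)].

Lemma comm_from_basic :
  (forall r t g h, phi g <> g -> phi h <> h -> commR (B1 r g) (B1 t h)) ->
  (forall r t g h, phi g <> g -> phi h = h -> t *+ 2 = 0 -> commR (B1 r g) (B2 t h)) ->
  (forall r t g h, phi g = g -> phi h = h -> r *+ 2 = 0 -> t *+ 2 = 0 ->
     commR (B2 r g) (B2 t h)) ->
  skew_commutative R phi.
Proof.
move=> H11 H12 H22 a b Sa Sb.
have Qeqr a0 : forall b1 b2, gr_eq b1 b2 -> commR a0 b1 -> commR a0 b2.
  by move=> b1 b2 E C; apply: comm_sym; apply: (comm_eql E); apply: comm_sym.
have Qcatr a0 : forall b1 b2, commR a0 b1 -> commR a0 b2 -> commR a0 (b1 ++ b2).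
  by move=> b1 b2 C1 C2; apply: comm_sym; apply: comm_catl; apply: comm_sym.
have Q0r a0 : commR a0 [::] by apply: comm_sym; apply: comm_nil.
move: b Sb; apply: (skew_ind Hphi (Q := fun a => forall b, Defs.skew phi b -> commR a b)) => //.
- by move=> a1 a2 E H b Sb; apply: (comm_eql E); apply: H.
- by move=> b _; apply: comm_nil.
- by move=> a1 a2 H1 H2 b Sb; apply: comm_catl; [apply: H1 | apply: H2].
- move=> r g gN; apply: (skew_ind Hphi); [exact: Qeqr | exact: Q0r | exact: Qcatr | |].
  + by move=> t h hN; apply: H11.
  + by move=> t h hF Ht; apply: H12.
- move=> r g gF Hr; apply: (skew_ind Hphi); [exact: Qeqr | exact: Q0r | exact: Qcatr | |].
  + by move=> t h hN; apply: comm_sym; apply: H12.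
  + by move=> t h hF Ht; apply: H22.
Qed.

End Conv.

Section ConvA.
Variables (R : comPzRingType) (G : groupType) (phi : G -> G).
Hypothesis Hphi : involution phi.
Hypotheses (HK : commutative_set (Ksub phi)) (HR : R2sq_zero R).
Local Open Scope ring_scope.

Lemma KN x : phi x <> x -> Ksub phi x. Proof. exact: gen_base. Qed.
Lemma KNphi x : phi x <> x -> Ksub phi (phi x).
Proof. by move=> xN; apply: gen_base; rewrite phiKg // => E; apply: xN. Qed.

Lemma lemma1K g h : phi g <> g -> phi h = h ->
  (g * h = h * g /\ h * phi g = phi g * h)%g \/ (g * h = h * phi g /\ h * g = phi g * h)%g.
Proof.
move=> gN hF.
have inK : Ksub phi h -> (g * h = h * g /\ h * phi g = phi g * h)%g.
  by move=> Kh; split; apply: HK => //; [exact: KN | exact: KNphi].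
case: (eqVneq (phi (g * h)%g) (g * h)%g) => [E|/eqP E]; last first.
  left; apply: inK; have -> : h = (g^-1 * (g * h))%g by rewrite mulKg.
  by apply: gen_mul; [apply: gen_inv; exact: KN | exact: KN].
case: (eqVneq (phi (h * g)%g) (h * g)%g) => [E'|/eqP E']; last first.
  left; apply: inK; have -> : h = ((h * g) * g^-1)%g by rewrite mulgK.
  by apply: gen_mul; [exact: KN | apply: gen_inv; exact: KN].
by right; move: E E'; rewrite !phiM // hF => -> ->.
Qed.

Lemma a11 (r t : R) g h : phi g <> g -> phi h <> h -> commR (B1 phi r g) (B1 phi t h).
Proof.
move=> gN hN x.
have c1 : (h * g = g * h)%g by apply: HK; apply: KN.
have c2 : (h * phi g = phi g * h)%g by apply: HK; [exact: KN | exact: KNphi].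
have c3 : (phi h * g = g * phi h)%g by apply: HK; [exact: KNphi | exact: KN].
have c4 : (phi h * phi g = phi g * phi h)%g by apply: HK; exact: KNphi.
rewrite /gr_mul /= !coef_cons !coef_nil c1 c2 c3 c4.
rewrite !mulrN !mulNr !opprK (mulrC t r); congr (_ + _); exact: addrCA.
Qed.

Lemma a12 (r t : R) g h : phi g <> g -> phi h = h -> t *+ 2 = 0 -> commR (B1 phi r g) (B2 t h).
Proof.
move=> gN hF Ht x.
have Hu : (r * t) *+ 2 = 0 by rewrite -mulrnAr Ht mulr0.
rewrite /gr_mul /= !coef_cons !coef_nil !mulNr !mulrN (mulrC t r) (negt Hu).
have [[c1 c2]|[c1 c2]] := lemma1K gN hF; first by rewrite c1 c2.
by rewrite c2 -c1 !addr0 addrC.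
Qed.

Lemma a22 (r t : R) g h : phi g = g -> phi h = h -> r *+ 2 = 0 -> t *+ 2 = 0 ->
  commR (B2 r g) (B2 t h).
Proof.
move=> gF hF Hr Ht x.
rewrite /gr_mul /= !coef_cons !coef_nil (mulrC t r) (HR Hr Ht).
by rewrite !if_same.
Qed.

Lemma conv_a : skew_commutative R phi.
Proof.
apply: (comm_from_basic Hphi).
- by move=> *; apply: a11.
- by move=> *; apply: a12.
- by move=> *; apply: a22.
Qed.

End ConvA.

Section ConvB.
Variables (R : comPzRingType) (G : groupType) (phi : G -> G).
Hypothesis Hphi : involution phi.
Local Open Scope ring_scope.
Hypothesis H4 : 4%:R = 0 :> R.
Hypothesis Hd : forall x : G, derived G (x^-1 * phi x)%g.
Hypothesis HF : ~ R2sq_zero R -> commutative_set (fixed_set phi).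
Variable s : G.
Hypotheses (s1 : s <> 1%g) (Hs : forall z, derived G z <-> z = 1%g \/ z = s).

Lemma sinD : derived G s. Proof. by apply/Hs; right. Qed.

Lemma bss1 : (s * s = 1)%g.
Proof.
have : derived G (s * s)%g by apply: gen_mul; exact: sinD.
case/Hs => // E; case: s1; apply: (mulgI s); by rewrite mulg1.
Qed.

Lemma bcomm x y : ([~ x, y] = 1 \/ [~ x, y] = s)%g.
Proof. by apply/Hs; apply: gen_base; exists x, y. Qed.

Lemma bcentral x : (x * s = s * x)%g.
Proof.
case: (bcomm s x) => [/eqP/commgP E|]; first by rewrite E.
rewrite /commg /conjg => E.
have := congr1 (fun z => s * z)%g E; rewrite mulVKg bss1 => E1.
have := congr1 (fun z => x * z)%g E1; rewrite mulVKg mulg1 -{2}[x]mul1g => /(mulIg x) E2.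
by case: s1.
Qed.

Lemma bnoncomm x y : (x * y <> y * x -> x * y = y * x * s)%g.
Proof.
move=> xy; case: (bcomm x y) => [/eqP/commgP E|]; first by case: xy.
rewrite /commg /conjg => E.
have := congr1 (fun z => x * z)%g E; rewrite mulVKg => E1.
by have := congr1 (fun z => y * z)%g E1; rewrite mulVKg mulgA.
Qed.

Lemma bphi x : phi x = x \/ phi x = (x * s)%g.
Proof.
case/Hs: (Hd x) => E; [left|right].
  by apply: (mulgI (x^-1)%g); rewrite E mulVg.
by rewrite -E mulVKg.
Qed.

Lemma nss a b : (a * s * (b * s) = a * b)%g.
Proof. by rewrite -mulgA (mulgA s) -bcentral -mulgA bss1 mulg1. Qed.
Lemma nsl a b : (a * (b * s) = a * b * s)%g. Proof. by rewrite mulgA. Qed.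
Lemma nsm a b : (a * s * b = a * b * s)%g.
Proof. by rewrite -mulgA -bcentral mulgA. Qed.
Lemma nss2 a : (a * s * s = a)%g. Proof. by rewrite -mulgA bss1 mulg1. Qed.

Lemma uu (u : R) : u + u = - u + - u.
Proof.
rewrite -opprD; apply/eqP; rewrite -addr_eq0.
have -> : u + u + (u + u) = u *+ 4 by rewrite !mulrS mulr0n addr0 !addrA.
by rewrite -mulr_natr H4 mulr0.
Qed.

Lemma phiN x : phi x <> x -> phi x = (x * s)%g.
Proof. by case: (bphi x). Qed.

Lemma b11 (r t : R) g h : phi g <> g -> phi h <> h -> commR (B1 phi r g) (B1 phi t h).
Proof.
move=> gN hN x.
rewrite /gr_mul /= !coef_cons !coef_nil (phiN gN) (phiN hN) !nss !nsl !nsm.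
rewrite !mulrN !mulNr !opprK (mulrC t r).
case: (eqVneq (h * g)%g (g * h)%g) => [->|/eqP ne]; first by [].
rewrite (bnoncomm ne) !nss2 !addr0.
case: eqP => _; case: eqP => _; rewrite ?addr0 ?add0r //; first [exact: uu | exact: esym (uu _)].
Qed.

Lemma b12 (r t : R) g h : phi g <> g -> phi h = h -> t *+ 2 = 0 ->
  commR (B1 phi r g) (B2 t h).
Proof.
move=> gN hF Ht x.
have Hu : (r * t) *+ 2 = 0 by rewrite -mulrnAr Ht mulr0.
rewrite /gr_mul /= !coef_cons !coef_nil (phiN gN) !nsl !nsm !mulNr !mulrN (mulrC t r) (negt Hu).
case: (eqVneq (h * g)%g (g * h)%g) => [->|/eqP ne]; first by [].
by rewrite (bnoncomm ne) !nss2 !addr0 addrC.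
Qed.

Lemma b22 (r t : R) g h : phi g = g -> phi h = h -> r *+ 2 = 0 -> t *+ 2 = 0 ->
  commR (B2 r g) (B2 t h).
Proof.
move=> gF hF Hr Ht x.
rewrite /gr_mul /= !coef_cons !coef_nil (mulrC t r).
case: (eqVneq (h * g)%g (g * h)%g) => [->|ne]; first by [].
case: (eqVneq (r * t) 0) => [->|nz]; first by rewrite !if_same.
exfalso; move/eqP: ne; apply; apply: (HF _ hF gF) => HR; move/eqP: nz; apply; exact: HR.
Qed.

Lemma conv_b : skew_commutative R phi.
Proof.
apply: (comm_from_basic Hphi).
- by move=> *; apply: b11.
- by move=> *; apply: b12.
- by move=> *; apply: b22.
Qed.

End ConvB.

Theorem theorem2p5 (R : comPzRingType) (G : groupType) (phi : G -> G) :
  ~ char_is R 2 ->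
  (exists r : R, R2 r /\ r <> 0%R) ->
  nonabelian G ->
  involution phi ->
  (skew_commutative R phi <->
     (commutative_set (Ksub phi) /\ R2sq_zero R)
  \/ [/\ char_is R 4, two_elements (derived G),
         (forall g : G, derived G (g^-1 * phi g)%g),
         (forall g : G, fixed_set phi (g * g)%g)
       & (~ R2sq_zero R -> commutative_set (fixed_set phi))]).
Proof.
move=> nc2 [t0 [Ht0 Ht0n]] nab Hphi.
have Ht0n' : t0 != 0%R by apply/eqP.
have H1 := one_ne0 Ht0n'.
have H3 := three_ne0 Ht0 Ht0n'.
have H2 : (2%:R != 0 :> R)%R.
  apply/eqP => E; apply: nc2; split => // m /andP [m0 m2].
  have -> : m = 1%N by case: m m0 m2 => [|[|]].
  by rewrite GRing.mulr1n.
split.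
- move=> Hsc.
  have HB := fwdB Hphi Ht0 Ht0n' Hsc.
  have HA : forall g h : G, phi g <> g -> phi h <> h -> (g * h <> h * g)%g ->
     [/\ (g * h = phi g * phi h)%g, (g * h = h * phi g)%g & (g * h = phi h * g)%g].
    by move=> g h gN hN gh; case: (fwdA Hphi Ht0 Ht0n' H2 Hsc gN hN gh).
  case: (classic (exists g h : G, phi g <> g /\ phi h <> h /\ (g * h <> h * g)%g))
    => [[g [h [gN [hN gh]]]]|Hno].
  + right; have [_ _ _ H4] := fwdA Hphi Ht0 Ht0n' H2 Hsc gN hN gh.
    split.
    * split => // m /andP [m0 m4].
      by case: m m0 m4 => [|[|[|[|m]]]] //= _ _; rewrite ?GRing.mulr1n.
    * exact: (S_two Hphi HB HA gN hN gh).
    * exact: (S9 Hphi HA gN hN gh).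
    * exact: (S10 Hphi HB HA gN hN gh).
    * exact: (fwdC Hphi Hsc).
  + have HN : forall x y : G, phi x <> x -> phi y <> y -> (x * y = y * x)%g.
      move=> x y xN yN; case: (eqVneq (x * y)%g (y * x)%g) => [//|/eqP ne].
      by case: Hno; exists x, y.
    left; split.
    * by apply: gen_comm => x y; exact: HN.
    * case: (classic (R2sq_zero R)) => // HnR; exfalso.
      exact: (NF_contra Hphi HB nab HN (fwdC Hphi Hsc HnR)).
- case.
  + by move=> [HK HR]; exact: (conv_a Hphi HK HR).
  + move=> [Hc4 [a [b [ab Hab]]] Hd _ HF].
    have [H4 _] := Hc4.
    have := (Hab 1%g).1 (gen_one _).
    case=> E.
    * apply: (conv_b Hphi H4 Hd HF (s := b)); first by move=> Eb; apply: ab; rewrite -E Eb.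
      by move=> z; rewrite Hab E.
    * apply: (conv_b Hphi H4 Hd HF (s := a)); first by move=> Ea; apply: ab; rewrite -E Ea.
      by move=> z; rewrite Hab E or_comm.
Qed.
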